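(* Let $G$ be a bipartite permutation graph with a transitive vertex ordering $<$, and let $M$ be a uniquely restricted matching in $G$ starting with $e'\in E(G)$. Let $e\in E(G)$ be such that $l(e)<l(e')$ and $\{e,e'\}$ is a uniquely restricted matching in $G$. Then $\{e\}\cup M$ is a uniquely restricted matching in $G$ starting with $e$.
   Context: Graphs are finite, simple, undirected. A permutation graph is a graph isomorphic to some $G_\pi$, where for a permutation $\pi$ of $\{1,\dots,n\}$, $G_\pi$ has vertex set $\{1,\dots,n\}$ and edges $ij$ with $(i-j)(\pi(i)-\pi(j))<0$; a bipartite permutation graph is a permutation graph that is bipartite. An ordering $<$ of $V(G)$ is a transitive vertex ordering if for all $u<v<w$: (a) $uv,vw\in E(G)$ implies $uw\in E(G)$, and (b) $uw\in E(G)$ implies $uv\in E(G)$ or $vw\in E(G)$. For an edge $e=uv$, $l(e)=\min_<\{u,v\}$ and $r(e)=\max_<\{u,v\}$. A matching is a set of pairwise vertex-disjoint edges; it is uniquely restricted if no other matching of $G$ matches exactly the same vertex set. A matching $M$ whose edges are labelled $e_1,\dots,e_{|M|}$ with $l(e_1)<l(e_2)<\cdots<l(e_{|M|})$ is said to start with $e_1$. *)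

(* Defs.v *)
From mathcomp Require Import all_boot all_order all_fingroup.
Set Implicit Arguments. Unset Strict Implicit. Unset Printing Implicit Defensive.

(* A finite simple graph: vertex type T, adjacency relation adj
   (assumed symmetric and irreflexive in the theorem). *)

(* G_pi for pi : 'S_n: ij is an edge iff (i-j)(pi i - pi j) < 0. *)
Definition perm_adj (n : nat) (pi : 'S_n) (i j : 'I_n) : bool :=
  ((i < j) && (pi j < pi i)) || ((j < i) && (pi i < pi j)).

Definition is_permutation_graph (T : finType) (adj : rel T) : Prop :=
  exists n (pi : 'S_n) (phi : T -> 'I_n),
    bijective phi /\ forall x y, adj x y = perm_adj pi (phi x) (phi y).

Definition is_bipartite (T : finType) (adj : rel T) : Prop :=
  exists c : T -> bool, forall x y, adj x y -> c x != c y.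

Definition is_bipartite_permutation_graph (T : finType) (adj : rel T) : Prop :=
  is_permutation_graph adj /\ is_bipartite adj.

(* A linear ordering of V(G) is given by an injective rank f : T -> nat;
   u < v  iff  f u < f v. *)
Definition transitive_vertex_ordering (T : finType) (adj : rel T) (f : T -> nat) : Prop :=
  injective f /\
  forall u v w, f u < f v -> f v < f w ->
    (adj u v -> adj v w -> adj u w) /\
    (adj u w -> adj u v || adj v w).

Definition is_edge (T : finType) (adj : rel T) (E : {set T}) : bool :=
  [exists u, exists v, adj u v && (E == [set u; v])].

Definition is_matching (T : finType) (adj : rel T) (M : {set {set T}}) : Prop :=
  (forall E, E \in M -> is_edge adj E) /\
  (forall E1 E2, E1 \in M -> E2 \in M -> E1 != E2 -> [disjoint E1 & E2]).

Definition uniquely_restricted (T : finType) (adj : rel T) (M : {set {set T}}) : Prop :=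
  is_matching adj M /\
  forall M', is_matching adj M' -> cover M' = cover M -> M' = M.

(* rank of l(E) = min_< E, i.e. the minimal rank of an endpoint of E. *)
Definition lrank (T : finType) (f : T -> nat) (E : {set T}) : nat :=
  \big[minn/(\max_(y : T) f y)%N]_(x in E) f x.

Definition starts_with (T : finType) (f : T -> nat) (M : {set {set T}}) (E : {set T}) : Prop :=
  E \in M /\ forall E', E' \in M -> lrank f E <= lrank f E'.

(* Main.v *)
Require Import Defs.
From mathcomp Require Import all_boot all_order all_fingroup.
Set Implicit Arguments. Unset Strict Implicit. Unset Printing Implicit Defensive.

Definition good (T : finType) (adj : rel T) (f : T -> nat) :=
  [/\ symmetric adj, irreflexive adj, is_bipartite adj & transitive_vertex_ordering adj f].

Lemma no_mid (T : finType) (adj : rel T) f (u v w : T) : @good T adj f -> adj u v -> adj v w -> f u < f v -> f v < f w -> False.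
Proof.
case=> sym irr [c hc] [inj tr] uv vw fuv fvw.
have [ha _] := tr u v w fuv fvw.
have uw := ha uv vw.
move: (hc _ _ uv) (hc _ _ vw) (hc _ _ uw).
by case: (c u); case: (c v); case: (c w).
Qed.

Lemma span (T : finType) (adj : rel T) f (u v w : T) : @good T adj f -> f u < f v -> f v < f w -> adj u w -> adj u v || adj v w.
Proof. case=> _ _ _ [_ tr] h1 h2; exact: (tr u v w h1 h2).2. Qed.

Lemma set2_eq (T : finType) (u v x y : T) : [set u; v] = [set x; y] -> (u = x /\ v = y) \/ (u = y /\ v = x).
Proof.
move=> E.
have: u \in [set x; y] by rewrite -E set21.
have: v \in [set x; y] by rewrite -E set22.
have: x \in [set u; v] by rewrite E set21.
have: y \in [set u; v] by rewrite E set22.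
rewrite !inE => /orP[]/eqP ? /orP[]/eqP ? /orP[]/eqP ? /orP[]/eqP ?; subst; auto.
Qed.

Lemma is_edge2 (T : finType) (adj : rel T) (u v : T) : adj u v -> is_edge adj [set u; v].
Proof. move=> h; apply/existsP; exists u; apply/existsP; exists v; by rewrite h eqxx. Qed.

Lemma edge2_adj (T : finType) (adj : rel T) (u v : T) : symmetric adj -> is_edge adj [set u; v] -> adj u v.
Proof.
move=> sym /existsP[x /existsP[y /andP[xy /eqP /set2_eq]]].
by case=> -[-> ->]; rewrite // sym.
Qed.

Lemma edge_set2 (T : finType) (adj : rel T) (E : {set T}) u : symmetric adj -> is_edge adj E -> u \in E -> exists v, adj u v /\ E = [set u; v].
Proof.
move=> sym /existsP[x /existsP[y /andP[xy /eqP ->]]].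
rewrite !inE => /orP[] /eqP ->; first by exists y.
exists x; split; first by rewrite sym. by rewrite setUC.
Qed.

Lemma edge_orient (T : finType) (adj : rel T) f (E : {set T}) : good adj f -> is_edge adj E ->
  exists a b, [/\ E = [set a; b], adj a b & f a < f b].
Proof.
case=> sym irr _ [inj _] /existsP[x /existsP[y /andP[xy /eqP ->]]].
have nxy : x != y by apply: contraTneq xy => ->; rewrite irr.
case: (ltngtP (f x) (f y)) => h.
- by exists x, y.
- by exists y, x; rewrite setUC sym.
- by move/inj: h => exy; rewrite exy eqxx in nxy.
Qed.

Definition cross (T : finType) (adj : rel T) (E1 E2 : {set T}) :=
  exists u p r q, [/\ E1 = [set u; p], E2 = [set r; q], adj u q & adj r p].

Lemma cross_sym (T : finType) (adj : rel T) E1 E2 : cross adj E1 E2 -> cross adj E2 E1.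
Proof. by case=> u [p [r [q [h1 h2 h3 h4]]]]; exists r, q, u, p. Qed.

Lemma cross2 (T : finType) (adj : rel T) a b c d : symmetric adj -> cross adj [set a; b] [set c; d] ->
  (adj a d /\ adj c b) \/ (adj a c /\ adj d b).
Proof.
move=> sym [u [p [r [q [/set2_eq h1 /set2_eq h2 h3 h4]]]]].
have S x y : adj x y -> adj y x by rewrite sym.
case: h1 => -[? ?]; case: h2 => -[? ?]; subst.
all: by [left; split; auto | right; split; auto].
Qed.

Lemma match_eq (T : finType) (adj : rel T) (X : {set {set T}}) E1 E2 v : is_matching adj X -> E1 \in X -> E2 \in X -> v \in E1 -> v \in E2 -> E1 = E2.
Proof.
case=> _ dis h1 h2 v1 v2; apply/eqP; apply/negPn/negP => ne.
by have := disjointFr (dis _ _ h1 h2 ne) v1; rewrite v2.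
Qed.

Lemma bigmin_le (I : eqType) (r : seq I) (P : pred I) (F : I -> nat) m i :
  i \in r -> P i -> \big[minn/m]_(x <- r | P x) F x <= F i.
Proof.
elim: r => // a r IH; rewrite inE big_cons => /orP[/eqP<-|ir] Pi.
  by rewrite Pi geq_minl.
case: (P a); last exact: IH.
by rewrite geq_min IH ?orbT.
Qed.

Lemma lrank2 (T : finType) (f : T -> nat) u v : f u <= f v -> lrank f [set u; v] = f u.
Proof.
move=> le; apply/eqP; rewrite eqn_leq; apply/andP; split.
  by apply: bigmin_le; rewrite ?mem_index_enum ?set21.
apply: (big_ind (fun m => f u <= m)).
- exact: leq_bigmax.
- by move=> x y hx hy; rewrite leq_min hx hy.
- by move=> i; rewrite !inE => /orP[]/eqP->.
Qed.
Lemma disjI (T:finType) (A B : {set T}) : (forall z, z \in A -> z \notin B) -> [disjoint A & B].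
Proof. move=> h; rewrite disjoints_subset; apply/subsetP => z /h; by rewrite inE. Qed.

Lemma swap_ok (T : finType) (adj : rel T) (X : {set {set T}}) u a r b :
  symmetric adj -> irreflexive adj -> is_matching adj X ->
  [set u; a] \in X -> [set r; b] \in X -> [set u; a] != [set r; b] ->
  adj u b -> adj r a ->
  [/\ is_matching adj ((X :\ [set u;a] :\ [set r;b]) :|: [set [set u; b]; [set r; a]]),
      cover ((X :\ [set u;a] :\ [set r;b]) :|: [set [set u; b]; [set r; a]]) = cover X &
      (X :\ [set u;a] :\ [set r;b]) :|: [set [set u; b]; [set r; a]] != X].
Proof.
move=> sym irr mX h1 h2 ne ub ra.
have ua : adj u a by apply: edge2_adj => //; exact: mX.1.
have rb : adj r b by apply: edge2_adj => //; exact: mX.1.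
have notin2 v : v \in [set u; a] -> v \in [set r; b] -> False.
  by move=> v1 v2; move: ne; rewrite (match_eq mX h1 h2 v1 v2) eqxx.
have old E v : E \in X -> E != [set u; a] -> E != [set r; b] -> (v \in [set u; a]) || (v \in [set r; b]) -> v \notin E.
  move=> hE n1 n2 /orP[] vi; apply/negP => vE.
  - by move: n1; rewrite (match_eq mX hE h1 vE vi) eqxx.
  - by move: n2; rewrite (match_eq mX hE h2 vE vi) eqxx.
have nur : u != r by apply/eqP => e; apply: (notin2 u); rewrite ?set21 // e set21.
have nua : u != a by apply: contraTneq ua => ->; rewrite irr.
have nbr : b != r by apply: contraTneq rb => ->; rewrite irr.
have nba : b != a by apply/eqP => e; apply: (notin2 a); rewrite ?set22 // -e set22.
have nub : u != b by apply: contraTneq ub => ->; rewrite irr.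
have nra : r != a by apply: contraTneq ra => ->; rewrite irr.
have oldnew E : E \in X -> E != [set u; a] -> E != [set r; b] ->
   [disjoint E & [set u; b]] /\ [disjoint E & [set r; a]].
  move=> hE n1 n2; split; rewrite disjoint_sym; apply: disjI => z; rewrite !inE => /orP[]/eqP->;
    apply: old => //; rewrite !inE eqxx ?orbT //.
have nn : [disjoint [set u; b] & [set r; a]].
  apply: disjI => z; rewrite !inE => /orP[]/eqP->; apply/norP; split => //.
split.
- split.
  + move=> E; rewrite !inE => /orP[/andP[_ /andP[_ hE]] | /orP[]/eqP->].
    * exact: mX.1.
    * exact: is_edge2.
    * exact: is_edge2.
  + move=> F1 F2; rewrite !inE => /orP[/andP[n12 /andP[n11 hF1]] | /orP[]/eqP->]
                                  /orP[/andP[n22 /andP[n21 hF2]] | /orP[]/eqP->] neq.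
    * exact: mX.2.
    * by case: (oldnew _ hF1 n11 n12).
    * by case: (oldnew _ hF1 n11 n12).
    * by case: (oldnew _ hF2 n21 n22) => d _; rewrite disjoint_sym.
    * by rewrite eqxx in neq.
    * exact: nn.
    * by case: (oldnew _ hF2 n21 n22) => _ d; rewrite disjoint_sym.
    * by rewrite disjoint_sym.
    * by rewrite eqxx in neq.
- apply/setP => v; apply/bigcupP/bigcupP => -[E hE vE].
  + move: hE; rewrite !inE => /orP[/andP[_ /andP[_ hE]] | /orP[]/eqP Ee]; first by exists E.
    * move: vE; rewrite Ee !inE => /orP[]/eqP->; [exists [set u; a] | exists [set r; b]];
        (try done); by rewrite !inE eqxx ?orbT ?orTb.
    * move: vE; rewrite Ee !inE => /orP[]/eqP->; [exists [set r; b] | exists [set u; a]];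
        (try done); by rewrite !inE eqxx ?orbT ?orTb.
  + case: (eqVneq E [set u; a]) => [Ee|n1].
      move: vE; rewrite Ee !inE => /orP[]/eqP->; [exists [set u; b] | exists [set r; a]];
        (try done); by rewrite !inE eqxx ?orbT ?orTb.
    case: (eqVneq E [set r; b]) => [Ee|n2].
      move: vE; rewrite Ee !inE => /orP[]/eqP->; [exists [set r; a] | exists [set u; b]];
        (try done); by rewrite !inE eqxx ?orbT ?orTb.
    by exists E; rewrite // !inE n1 n2 hE.
- apply/eqP => eqX.
  have hn : [set u; b] \in X by rewrite -eqX !inE eqxx ?orbT.
  have := match_eq mX hn h1 (set21 u b) (set21 u a) => e.
  by apply: (notin2 b); rewrite ?set22 // -e set22.
Qed.

Lemma coverD_sym (T : finType) (adj : rel T) (A B : {set {set T}}) v :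
  is_matching adj A -> is_matching adj B -> cover A = cover B ->
  v \in cover (B :\: A) -> v \in cover (A :\: B).
Proof.
move=> mA mB cAB /bigcupP[E]; rewrite inE => /andP[EA EB] vE.
have : v \in cover A by rewrite cAB; apply/bigcupP; exists E.
case/bigcupP => E' E'A vE'; apply/bigcupP; exists E' => //; rewrite inE E'A andbT.
apply/negP => E'B; have e := match_eq mB E'B EB vE' vE.
by move: E'A; rewrite e (negbTE EA).
Qed.

Lemma ur_cross (T:finType) (adj : rel T) X E1 E2 : symmetric adj -> irreflexive adj ->
  uniquely_restricted adj X -> E1 \in X -> E2 \in X -> E1 != E2 -> cross adj E1 E2 -> False.
Proof.
move=> sym irr [mX uX] h1 h2 ne [u [p [r [q [e1 e2 uq rp]]]]]; subst.
have [m c n] := swap_ok sym irr mX h1 h2 ne uq rp.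
by move: n; rewrite (uX _ m c) eqxx.
Qed.

Lemma key (T : finType) (adj : rel T) f (A B : {set {set T}}) u a b :
 good adj f -> is_matching adj A -> is_matching adj B -> cover A = cover B ->
 (forall v, v \in cover (A :\: B) -> f u <= f v) ->
 [set u;a] \in A -> [set u;b] \in B -> [set u;a] \notin B -> f b < f a ->
 exists r, [/\ [set r; b] \in A, [set r;b] != [set u;a] & adj r a].
Proof.
move=> G mA mB cAB umin hA hB nB ba.
have [sym irr _ [inj _]] := G.
have ua : adj u a by apply: edge2_adj => //; exact: mA.1.
have ub : adj u b by apply: edge2_adj => //; exact: mB.1.
have nA : [set u; b] \notin A.
  apply/negP => hA'; have e := match_eq mA hA' hA (set21 u b) (set21 u a).
  by move: nB; rewrite -e hB.
have ltub : f u < f b.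
  rewrite ltn_neqAle umin; last first.
    apply: (coverD_sym mA mB cAB); apply/bigcupP; exists [set u; b]; rewrite ?inE ?hB ?nA ?eqxx ?orbT //.
  rewrite andbT; apply: contraTneq ub => /inj ->; by rewrite irr.
have : b \in cover A by rewrite cAB; apply/bigcupP; exists [set u; b] => //; exact: set22.
case/bigcupP => E EA bE.
have [r [br Er]] := edge_set2 sym (mA.1 _ EA) bE.
have Er' : E = [set r; b] by rewrite Er setUC.
rewrite Er' in EA.
have nEr : [set r; b] != [set u; a].
  apply/negP => /eqP e; have : b \in [set u; a] by rewrite -e set22.
  rewrite !inE => /orP[]/eqP e'.
  - by move: ub; rewrite e' irr.
  - by move: ba; rewrite e' ltnn.
have EnB : [set r; b] \notin B.
  apply/negP => EB; have e := match_eq mB EB hB (set22 r b) (set22 u b).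
  by move: nA; rewrite -e EA.
have ltur : f u < f r.
  rewrite ltn_neqAle umin ?andbT.
  - apply/negP => /eqP /inj e; subst r.
    by move: nEr; rewrite (match_eq mA EA hA (set21 u b) (set21 u a)) eqxx.
  - by apply/bigcupP; exists [set r; b]; rewrite ?inE ?EA ?EnB ?eqxx.
have ltrb : f r < f b.
  case: (ltngtP (f r) (f b)) => // h.
  - by exfalso; exact: (no_mid G ub br ltub h).
  - by move/inj: h => e; subst; rewrite irr in br.
case/orP: (span G ltur (ltn_trans ltrb ba) ua) => [ur | ra].
- by exfalso; apply: (no_mid G ur _ ltur ltrb); rewrite sym.
- by exists r; split.
Qed.

Lemma edge_mem (T : finType) (adj : rel T) E : is_edge adj E -> exists x, x \in E.
Proof. by case/existsP => x /existsP[y /andP[_ /eqP ->]]; exists x; rewrite set21. Qed.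

Lemma ur_nocross (T:finType) (adj : rel T) f (N : {set {set T}}) : good adj f -> is_matching adj N ->
 (forall E1 E2, E1 \in N -> E2 \in N -> E1 != E2 -> ~ cross adj E1 E2) ->
 forall M2, is_matching adj M2 -> cover M2 = cover N -> M2 = N.
Proof.
move=> G mN ncr M2.
have [sym irr _ [inj _]] := G.
move: {2}#|M2 :\: N|.+1 (ltnSn #|M2 :\: N|) => n.
elim: n M2 => // n IH M2 ltn mM cM.
case: (eqVneq M2 N) => // neMN.
have [w win] : exists w, w \in cover (M2 :\: N).
  have [E hE] : exists E, (E \in M2 :\: N) || (E \in N :\: M2).
    case: (set_0Vmem (M2 :\: N)) => [e1|[E hE]]; last by exists E; rewrite hE.
    case: (set_0Vmem (N :\: M2)) => [e2|[E hE]]; last by exists E; rewrite hE orbT.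
    by move: neMN; rewrite eqEsubset -!setD_eq0 e1 e2 !eqxx.
  case/orP: hE => hE.
  - have [x xE] : exists x, x \in E.
      by apply: (edge_mem (adj := adj)); apply: mM.1; move: hE; rewrite inE => /andP[].
    by exists x; apply/bigcupP; exists E.
  - have [x xE] : exists x, x \in E.
      by apply: (edge_mem (adj := adj)); apply: mN.1; move: hE; rewrite inE => /andP[].
    by exists x; apply: (coverD_sym mM mN cM); apply/bigcupP; exists E.
case: (arg_minnP f (P := fun v => v \in cover (M2 :\: N)) win) => u uin umin.
case/bigcupP: (uin) => E1 E1in uE1; move: E1in; rewrite inE => /andP[E1nN E1M].
have [m [um E1e]] := edge_set2 sym (mM.1 _ E1M) uE1; subst E1.
have : u \in cover N by rewrite -cM; apply/bigcupP; exists [set u; m].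
case/bigcupP => E2 E2N uE2.
have [n' [un E2e]] := edge_set2 sym (mN.1 _ E2N) uE2; subst E2.
have E2nM : [set u; n'] \notin M2.
  apply/negP => h; have e := match_eq mM h E1M (set21 u n') (set21 u m).
  by move: E1nN; rewrite -e E2N.
have nmn : f m != f n'.
  by apply/negP => /eqP/inj e; subst; rewrite E2N in E1nN.
case: (ltngtP (f m) (f n')) => [lt|lt|eq]; last by rewrite eq eqxx in nmn.
- have umin' : forall v, v \in cover (N :\: M2) -> f u <= f v.
    by move=> v hv; apply: umin; exact: (coverD_sym mM mN cM hv).
  have [r [rN rne rn]] := key G mN mM (esym cM) umin' E2N E1M E2nM lt.
  exfalso; apply: (ncr _ _ E2N rN); first by rewrite eq_sym.
  by exists u, n', r, m.
- have [r [rM rne rm]] := key G mM mN cM umin E1M E2N E1nN lt.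
  have [mM3 cM3 _] := swap_ok sym irr mM E1M rM (ltac:(by rewrite eq_sym)) un rm.
  set M3 := _ :|: _ in mM3 cM3.
  have rnN : [set r; n'] \notin N.
    apply/negP => h; have e := match_eq mN h E2N (set22 r n') (set22 u n').
    by move: E2nM; rewrite -e rM.
  have sub : M3 :\: N \subset ((M2 :\: N) :\ [set u;m] :\ [set r;n']) :|: [set [set r;m]].
    apply/subsetP => E; rewrite !inE => /andP[EnN /orP[/andP[n2 /andP[n1 EM]] | /orP[]/eqP e]].
    - by rewrite n2 n1 EnN EM ?orbT.
    - by move: EnN; rewrite e E2N.
    - by rewrite e eqxx orbT.
  have c1 := subset_leq_card sub.
  have c2 := (leq_card_setU ((M2 :\: N) :\ [set u;m] :\ [set r;n']) [set [set r;m]]).1.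
  rewrite cards1 in c2.
  have c3 := cardsD1 [set u; m] (M2 :\: N).
  have c4 := cardsD1 [set r; n'] ((M2 :\: N) :\ [set u; m]).
  rewrite !inE E1nN E1M /= in c3.
  rewrite !inE rne rnN rM /= in c4.
  have card : #|M3 :\: N| < n.
    move: ltn; rewrite c3 c4 !add1n ltnS => h.
    by apply: leq_ltn_trans (leq_trans c1 c2) _; rewrite addn1.
  have e3 := IH M3 card mM3 (etrans cM3 cM).
  have rmN : [set r;m] \in N by rewrite -e3 !inE eqxx ?orbT.
  have rn : adj r n' by apply: edge2_adj => //; exact: mM.1.
  exfalso; apply: (ncr _ _ E2N rmN); last by exists u, n', r, m.
  apply/eqP => e; have : u \in [set r; m] by rewrite -e set21.
  rewrite !inE => /orP[]/eqP ?; subst.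
  + by move: rne; rewrite (match_eq mM rM E1M (set21 r n') (set21 r m)) eqxx.
  + by rewrite irr in um.
Qed.

Theorem corollary2 (T : finType) (adj : rel T) (f : T -> nat)
  (M : {set {set T}}) (e e' : {set T}) :
  symmetric adj -> irreflexive adj ->
  is_bipartite_permutation_graph adj ->
  transitive_vertex_ordering adj f ->
  uniquely_restricted adj M -> starts_with f M e' ->
  is_edge adj e -> is_edge adj e' ->
  lrank f e < lrank f e' ->
  uniquely_restricted adj [set e; e'] ->
  uniquely_restricted adj (e |: M) /\ starts_with f (e |: M) e.
Proof.
move=> sym irr [_ bip] tvo URM [e'M e'min] ee ee' lt UR2.
have G : good adj f by split.
have [_ _ _ [inj _]] := G.
have [a [b [ee_ ab fab]]] := edge_orient G ee.
have [x [y [ee'_ xy fxy]]] := edge_orient G ee'.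
have la : lrank f e = f a by rewrite ee_ lrank2 // ltnW.
have lx : lrank f e' = f x by rewrite ee'_ lrank2 // ltnW.
have fax : f a < f x by rewrite -la -lx.
have nee' : e != e' by apply: contraTneq lt => ->; rewrite ltnn.
have e2 : e \in [set e; e'] by rewrite set21.
have e2' : e' \in [set e; e'] by rewrite set22.
have dee' : [disjoint e & e'] := UR2.1.2 _ _ e2 e2' nee'.
have gMo (g : {set T}) : g \in M -> exists c d, [/\ g = [set c; d], adj c d, f c < f d & f x <= f c].
  move=> gM; have [c [d [g_ cd fcd]]] := edge_orient G (URM.1.1 _ gM).
  exists c, d; split => //; rewrite -lx -(lrank2 (ltnW fcd)) -g_; exact: e'min.
have nocross g : g \in M -> ~ cross adj e g.
  move=> gM cr.
  case: (eqVneq g e') => [ge | gne].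
    by subst g; exact: (ur_cross sym irr UR2 e2 e2' nee' cr).
  have [c [d [g_ cd fcd fxc]]] := gMo g gM.
  rewrite ee_ g_ in cr.
  have fac : f a < f c := leq_trans fax fxc.
  case: (cross2 sym cr) => [[ad cb] | [ac db]]; last exact: (no_mid G ac cd fac fcd).
  have xnc : x != c.
    apply/eqP => exc.
    have cg : c \in g by rewrite g_ set21.
    have ce' : c \in e' by rewrite ee'_ -exc set21.
    by move: gne; rewrite (match_eq URM.1 gM e'M cg ce') eqxx.
  have dny : d != y.
    apply/eqP => edy.
    have dg : d \in g by rewrite g_ set22.
    have de' : d \in e' by rewrite ee'_ edy set22.
    by move: gne; rewrite (match_eq URM.1 gM e'M dg de') eqxx.
  have ynb : y != b.
    apply/eqP => eyb.
    have be : b \in e by rewrite ee_ set22.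
    have be' : b \in e' by rewrite ee'_ -eyb set22.
    by move: (disjointFr dee' be); rewrite be'.
  have fcb : f c < f b.
    case: (ltngtP (f c) (f b)) => // h.
    - by exfalso; apply: (no_mid G ab _ fab h); rewrite sym.
    - by move/inj: h => ecb; rewrite ecb irr in cb.
  have fxc' : f x < f c by rewrite ltn_neqAle fxc andbT; apply: contra xnc => /eqP/inj ->.
  have xb : adj x b.
    case/orP: (span G fax (ltn_trans fxc' fcb) ab) => [ax|//].
    by exfalso; exact: (no_mid G ax xy fax fxy).
  have cee' : adj a y -> False.
    move=> ay; apply: (ur_cross sym irr UR2 e2 e2' nee').
    by exists a, b, x, y; split.
  case: (ltngtP (f y) (f b)) => [yb|by_|eq].
  - case/orP: (span G (ltn_trans fax fxy) yb ab) => [ay|yb'].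
    + exact: cee'.
    + exact: (no_mid G xy yb' fxy yb).
  - case/orP: (span G fxc' (ltn_trans fcb by_) xy) => [xc|cy].
      exact: (no_mid G xc cd fxc' fcd).
    case: (ltngtP (f d) (f y)) => [dy|yd|eq].
    + case/orP: (span G (ltn_trans fxc' fcd) dy xy) => [xd|dy'].
      * apply: (ur_cross sym irr URM e'M gM); first by rewrite eq_sym.
        by exists x, y, c, d; split.
      * exact: (no_mid G cd dy' fcd dy).
    + case/orP: (span G (ltn_trans fax fxy) yd ad) => [ay|yd'].
      * exact: cee'.
      * exact: (no_mid G xy yd' fxy yd).
    + by move/inj: eq => edy; rewrite edy eqxx in dny.
  - by move/inj: eq => eyb; rewrite eyb eqxx in ynb.
have disj g : g \in M -> [disjoint e & g].
  move=> gM; have [c [d [g_ cd fcd fxc]]] := gMo g gM.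
  have fac : f a < f c := leq_trans fax fxc.
  rewrite ee_ g_; apply: disjI => z; rewrite !inE => /orP[]/eqP-> ; apply/norP; split.
  - by apply: contraTneq fac => ->; rewrite ltnn.
  - by apply: contraTneq (ltn_trans fac fcd) => ->; rewrite ltnn.
  - apply/eqP => ebc; subst b.
    by apply: (no_mid G ab cd fab fcd).
  - apply/eqP => ebd; subst b.
    by apply: (nocross g gM); exists a, d, c, d; split.
have mEM : is_matching adj (e |: M).
  split.
  - move=> E; rewrite !inE => /orP[/eqP->|]; [exact: ee | exact: URM.1.1].
  - move=> E1 E2; rewrite !inE => /orP[/eqP->|h1] /orP[/eqP->|h2] ne.
    + by rewrite eqxx in ne.
    + exact: disj.
    + by rewrite disjoint_sym; exact: disj.
    + exact: URM.1.2.
have ncr : forall E1 E2, E1 \in e |: M -> E2 \in e |: M -> E1 != E2 -> ~ cross adj E1 E2.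
  move=> E1 E2; rewrite !inE => /orP[/eqP->|h1] /orP[/eqP->|h2] ne cr.
  - by rewrite eqxx in ne.
  - exact: (nocross _ h2 cr).
  - exact: (nocross _ h1 (cross_sym cr)).
  - exact: (ur_cross sym irr URM h1 h2 ne cr).
split.
- split => // M' mM' cM'; exact: (ur_nocross G mEM ncr mM' cM').
- split; first by rewrite setU11.
  move=> E'; rewrite !inE => /orP[/eqP->//|h].
  by apply: ltnW; exact: leq_trans lt (e'min _ h).
Qed.
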